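(* Let $G=(V,E)$ be a finite graph with vertices $V=\{v_1,\dots,v_n\}$ (loops and parallel edges allowed), and fix an orientation $\mathcal{O}$ of $G$. Then the number of distinct score vectors of orientations of $G$ equals the number of distinct score vectors of spanning subdigraphs of $G_{\mathcal{O}}$.
   Context: An orientation $\mathcal{O}$ of $G$ assigns to each edge with endpoints $v,w$ one of the ordered pairs $(v,w)$ or $(w,v)$ (a loop at $v$ gets $(v,v)$), giving the directed graph $G_{\mathcal{O}}$ on $V$. A spanning subdigraph of $G_{\mathcal{O}}$ is $(V,\{\mathcal{O}(e):e\in F\})$ for some $F\subseteq E$. For a directed graph $D$ on $V$, the score vector is $s_D=(s_D(v_1),\dots,s_D(v_n))$ with $s_D(v_i)=\deg^+_D(v_i)-\deg^-_D(v_i)$, where $\deg^+_D(v_i)$ (resp. $\deg^-_D(v_i)$) is the number of arcs with tail (resp. head) $v_i$. *)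

(* Defs.v *)
From mathcomp Require Import all_boot all_order all_algebra.
Set Implicit Arguments. Unset Strict Implicit. Unset Printing Implicit Defensive.
Import GRing.Theory Num.Theory.

(* A finite graph G = (V, E) with loops and parallel edges: edges form a finite
   type E, and [ends e] lists the two endpoints of e (in an arbitrary reference
   order; a loop at v has ends e = (v, v)). *)

Definition is_orientation (V E : finType) (ends : E -> V * V)
  (o : {ffun E -> V * V}) : bool :=
  [forall e, (o e == ends e) || (o e == ((ends e).2, (ends e).1))].

(* Score vector of the spanning subdigraph (V, {o e : e in F}) of the
   directed graph given by o: s(v) = outdeg(v) - indeg(v). *)
Definition score (V E : finType) (o : {ffun E -> V * V}) (F : {set E})
  : {ffun V -> int} :=
  [ffun v => (#|[set e in F | (o e).1 == v]|%:Z
              - #|[set e in F | (o e).2 == v]|%:Z)%R].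

Definition n_orientation_scores (V E : finType) (ends : E -> V * V) : nat :=
  size (undup [seq score o setT
               | o <- enum [pred o : {ffun E -> V * V} | is_orientation ends o]]).

Definition n_subdigraph_scores (V E : finType) (O : {ffun E -> V * V}) : nat :=
  size (undup [seq score O F | F <- enum {set E}]).

(* Main.v *)
Require Import Defs.
From mathcomp Require Import all_boot all_order all_algebra.
From mathcomp Require Import zify ring.
Import GRing.Theory Num.Theory.
Set Implicit Arguments. Unset Strict Implicit.

Section Aux.
Variables (V E : finType).
Local Open Scope ring_scope.

Definition cc (a : V * V) (v : V) : int := (a.1 == v)%:R - (a.2 == v)%:R.

Lemma card_sum (S : {set E}) (P : pred E) :
  #|[set e in S | P e]| = (\sum_(e in S) (P e : nat))%N.
Proof.
rewrite -sum1_card big_mkcond [RHS]big_mkcond /=; apply: eq_bigr => e _.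
by rewrite inE; case: (e \in S); case: (P e).
Qed.

Lemma scoreE (o : {ffun E -> V * V}) S v :
  score o S v = \sum_(e in S) cc (o e) v.
Proof.
rewrite /score ffunE !card_sum -!natz !natr_sum -sumrB.
by apply: eq_bigr => e _.
Qed.

Lemma cc_swap a v : cc (a.2, a.1) v = - cc a v.
Proof. by rewrite /cc /= opprB. Qed.

Definition rev (O : {ffun E -> V * V}) (F : {set E}) : {ffun E -> V * V} :=
  [ffun e => if e \in F then ((O e).2, (O e).1) else O e].

Definition gg (O : {ffun E -> V * V}) (x : {ffun V -> int}) : {ffun V -> int} :=
  [ffun v => score O setT v - 2 * x v].

Lemma gg_inj O : injective (gg O).
Proof.
move=> x y /ffunP H; apply/ffunP => v; have := H v; rewrite !ffunE => h.
lia.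
Qed.

Lemma score_rev O F : score (rev O F) setT = gg O (score O F).
Proof.
apply/ffunP => v; rewrite scoreE /gg ffunE !scoreE.
rewrite (bigID (fun e => e \in F)) [X in _ = X - _](bigID (fun e => e \in F)) /=.
have -> : \sum_(i in [set: E] | i \in F) cc (rev O F i) v =
          - \sum_(i in F) cc (O i) v.
  rewrite -sumrN (eq_bigl (fun e => e \in F)); last by move=> e; rewrite in_setT.
  by apply: eq_bigr => e eF; rewrite /rev ffunE eF cc_swap.
have -> : \sum_(i in [set: E] | i \notin F) cc (rev O F i) v =
          \sum_(i in [set: E] | i \notin F) cc (O i) v.
  by apply: eq_bigr => e /andP[_ /negbTE h]; rewrite /rev ffunE h.
have -> : \sum_(i in [set: E] | i \in F) cc (O i) v = \sum_(i in F) cc (O i) v.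
  by apply: eq_bigl => e; rewrite in_setT.
ring.
Qed.

Lemma rev_orient ends O F : is_orientation ends O -> is_orientation ends (rev O F).
Proof.
move=> /forallP H; apply/forallP => e; rewrite /rev ffunE.
case: (e \in F) => //.
case/orP: (H e) => /eqP ->; first by rewrite eqxx orbT.
by rewrite -surjective_pairing eqxx.
Qed.

Lemma orient_rev ends O o : is_orientation ends O -> is_orientation ends o ->
  o = rev O [set e | o e != O e].
Proof.
move=> /forallP HO /forallP Ho; apply/ffunP => e; rewrite /rev !ffunE inE.
case: eqP => [//|ne] /=.
case/orP: (HO e) => /eqP E1; case/orP: (Ho e) => /eqP E2; rewrite E1 E2 /=;
  rewrite E1 E2 in ne => //; by [rewrite -surjective_pairing | ].
Qed.

End Aux.

Theorem lemma2p14 (V E : finType) (ends : E -> V * V) (O : {ffun E -> V * V}) :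
  is_orientation ends O ->
  n_orientation_scores ends = n_subdigraph_scores O.
Proof.
move=> HO; rewrite /n_orientation_scores /n_subdigraph_scores.
rewrite -[RHS](size_map (gg O)) -undup_map_inj; last exact: gg_inj.
apply: perm_size; apply: uniq_perm; rewrite ?undup_uniq // => x.
rewrite !mem_undup -map_comp; apply/mapP/mapP.
- case=> o; rewrite mem_enum => Ho ->.
  exists [set e | o e != O e]; first by rewrite mem_enum.
  by rewrite {1}(orient_rev HO Ho) score_rev.
- case=> F _ ->.
  exists (rev O F); first by rewrite mem_enum; exact: rev_orient.
  by rewrite score_rev.
Qed.
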